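(* Let $r,\alpha,p$ be nonnegative integers such that $r+1$ and $p$ are both prime. Then $(r+1)^{\alpha}p\in G_r$ if and only if for every nonnegative integer $t\le\alpha$ we have both $p\neq (r+1)^t+r$ and $(r+1)^t p+r$ is not prime.
   Context: For a positive integer $r$, the $r$-th Schemmel totient function $S_r:\mathbb{N}\to\mathbb{N}_0$ is the multiplicative arithmetic function (so $S_r(1)=1$ and $S_r(ab)=S_r(a)S_r(b)$ for coprime $a,b$) defined on prime powers by $S_r(p^{\alpha})=0$ if $p\le r$ and $S_r(p^\alpha)=p^{\alpha-1}(p-r)$ if $p>r$, for all primes $p$ and positive integers $\alpha$. $G_r$ denotes the set of positive integers not in the range of $S_r$ (Schemmel nontotient numbers of order $r$). *)

(* Defs.v *)
From mathcomp Require Import all_boot.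
Set Implicit Arguments. Unset Strict Implicit. Unset Printing Implicit Defensive.

Definition schemmel (r n : nat) : nat :=
  \prod_(p <- primes n) (if p <= r then 0 else p ^ (logn p n).-1 * (p - r)).

(* G_r : positive integers not in the range of S_r (on positive integers). *)
Definition schemmel_nontotient (r m : nat) : Prop :=
  0 < m /\ forall n, 0 < n -> schemmel r n <> m.

(* Main.v *)
Require Import Defs.
From mathcomp Require Import all_boot.
From mathcomp Require Import zify.

Definition fS (r n q : nat) := if q <= r then 0 else q ^ (logn q n).-1 * (q - r).

Lemma prime_dvd_bigprod (p : nat) (s : seq nat) (F : nat -> nat) :
  prime p -> p %| \prod_(i <- s) F i -> exists2 x, x \in s & p %| F x.
Proof.
move=> pp; elim: s => [|y s IH].
  rewrite big_nil dvdn1 => /eqP p1; by rewrite p1 in pp.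
rewrite big_cons Euclid_dvdM // => /orP [H|H].
  by exists y; rewrite ?inE ?eqxx.
by have [x xs Hx] := IH H; exists x; rewrite // inE xs orbT.
Qed.

Lemma dvdn_bigprod (s : seq nat) (F : nat -> nat) x :
  x \in s -> F x %| \prod_(i <- s) F i.
Proof.
elim: s => [//|y s IH]; rewrite inE big_cons => /orP [/eqP ->|H].
  exact: dvdn_mulr.
by apply: dvdn_mull; apply: IH.
Qed.

Lemma schemmel1 r s a : prime s -> 0 < a ->
  schemmel r (s ^ a) = if s <= r then 0 else s ^ a.-1 * (s - r).
Proof.
move=> ps a0; rewrite /schemmel primesX // primes_prime // big_cons big_nil muln1.
by rewrite lognX logn_prime // eqxx muln1.
Qed.

Lemma schemmel2 r s q a b : prime s -> prime q -> s != q -> 0 < a -> 0 < b ->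
  schemmel r (s ^ a * q ^ b) =
  (if s <= r then 0 else s ^ a.-1 * (s - r)) * (if q <= r then 0 else q ^ b.-1 * (q - r)).
Proof.
move=> ps pq sq a0 b0.
have sa : 0 < s ^ a by rewrite expn_gt0 prime_gt0.
have qb : 0 < q ^ b by rewrite expn_gt0 prime_gt0.
have Hp : perm_eq (primes (s ^ a * q ^ b)) [:: s; q].
  apply: uniq_perm; first exact: primes_uniq.
    by rewrite /= inE sq.
  move=> x; rewrite primesM // !primesX // !primes_prime // !inE //.
rewrite /schemmel (perm_big _ Hp) /= !big_cons big_nil muln1.
rewrite !lognM // !lognX !logn_prime // !eqxx (negbTE sq) eq_sym (negbTE sq).
by rewrite !muln0 addn0 add0n !muln1.
Qed.

Theorem lemma2p2 (r alpha p : nat) (hr : prime r.+1) (hp : prime p) :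
  schemmel_nontotient r (r.+1 ^ alpha * p) <->
  (forall t, t <= alpha -> p <> r.+1 ^ t + r /\ ~~ prime (r.+1 ^ t * p + r)).
Proof.
have r1 : 0 < r by case: r hr.
have p2 := prime_gt1 hp.
have ra : forall k, 0 < r.+1 ^ k by move=> k; rewrite expn_gt0.
split.
- move=> [m0 H] t ta.
  have Ea : r.+1 ^ (alpha - t) * r.+1 ^ t = r.+1 ^ alpha by rewrite -expnD subnK.
  split.
  + move=> Ep.
    case: t ta Ea Ep => [|t] ta Ea Ep.
      rewrite expn0 add1n in Ep; subst p.
      apply: (H (r.+1 ^ (alpha.+2))); first exact: ra.
      rewrite schemmel1 // ltnn subSnn muln1 /=; by rewrite expnS mulnC.
    have pr : r.+1 < p by rewrite Ep expnS; have := ra t; nia.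
    apply: (H (r.+1 ^ (alpha - t.+1).+1 * p ^ 2)).
      by rewrite muln_gt0 ra expn_gt0 prime_gt0.
    rewrite schemmel2 //; last by rewrite neq_ltn pr.
    rewrite ltnn subSnn muln1 /= leqNgt (ltn_trans (ltnSn r) pr) /= expn1.
    have -> : p - r = r.+1 ^ t.+1 by rewrite Ep addnK.
    by rewrite mulnA (mulnC _ p) -mulnA Ea mulnC.
  + apply/negP => pq.
    set q := r.+1 ^ t * p + r in pq.
    have qr : r.+1 < q by rewrite /q; have := ra t; nia.
    apply: (H (r.+1 ^ (alpha - t).+1 * q ^ 1)).
      by rewrite muln_gt0 ra expn_gt0 prime_gt0.
    rewrite schemmel2 //; last by rewrite neq_ltn qr.
    rewrite ltnn subSnn muln1 /= leqNgt (ltn_trans (ltnSn r) qr) /= expn0 mul1n.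
    by rewrite /q addnK mulnA Ea.
- move=> H; have pr1 : p != r.+1.
    by apply/eqP => E; have [/(_ E) //] := H 0 (leq0n _); rewrite expn0 add1n.
  split; first by rewrite muln_gt0 ra prime_gt0.
  move=> n n0 E.
  set m := r.+1 ^ alpha * p in E.
  have m0 : 0 < m by rewrite muln_gt0 ra prime_gt0.
  have pm : p %| schemmel r n by rewrite E dvdn_mull.
  have [q qn Hq] := @prime_dvd_bigprod p _ _ hp pm.
  have fq : (if q <= r then 0 else q ^ (logn q n).-1 * (q - r)) %| m.
    by rewrite -E; apply: dvdn_bigprod.
  move: qn; rewrite mem_primes => /and3P [pq _ _].
  case: ifP fq Hq => [_|qr] fq Hq.
    by move: fq; rewrite dvd0n => /eqP m00; rewrite m00 in m0.
  move/negbT: qr; rewrite -ltnNge => qr.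
  have qrd : q - r %| m by apply: dvdn_trans fq; apply: dvdn_mull.
  case: (eqVneq q p) => [Eq|nq].
  + subst q.
    have cop : coprime (p - r) p.
      rewrite coprime_sym prime_coprime //; apply/negP => /dvdn_leq.
      move=> /(_ ltac:(by rewrite subn_gt0)); lia.
    move: qrd; rewrite /m Gauss_dvdl // => /(dvdn_pfactor _ _ hr) [t ta Et].
    by have [/(_ ltac:(lia)) //] := H t ta.
  + move: Hq; rewrite Euclid_dvdM // Euclid_dvdX // dvdn_prime2 // eq_sym (negbTE nq) /=.
    move=> /dvdnP [d Ed].
    move: qrd; rewrite Ed /m dvdn_pmul2r ?prime_gt0 // => /(dvdn_pfactor _ _ hr) [t ta Et].
    have [_] := H t ta; rewrite -Et -Ed subnK ?pq //; exact: ltnW.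
Qed.
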